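(* For any integers $k\ge2$, $n\ge1$, any $k$-dimensional polytope $P$ and any $n$ positions $p_1,\dots,p_n\in P$, there exists a position $p\in P$ such that $\min_{i\in[n]}\{dis(p,p_i),dis(p,\partial P)\}\ge\frac{Disp(n;P)}{2}$.
   Context: $dis$ is Euclidean distance and $\partial P$ is the boundary of $P$. For integer $n\ge1$, $Disp(n;P)=\max_{X_1,\dots,X_n\in P}\min\{dis(X_i,\partial P),dis(X_i,X_j): i,j\in[n],i\ne j\}$. *)

(* Defs.v *)
From HB Require Import structures.
From mathcomp Require Import all_boot all_order all_algebra.
From mathcomp Require Import classical_sets reals.
Set Implicit Arguments. Unset Strict Implicit. Unset Printing Implicit Defensive.
Import Order.TTheory GRing.Theory Num.Theory.
Local Open Scope ring_scope.
Local Open Scope classical_set_scope.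

Section Defs.
Variable R : realType.

Definition dis (k : nat) (x y : 'rV[R]_k) : R :=
  Num.sqrt (\sum_(i < k) (x ord0 i - y ord0 i) ^+ 2).

Definition interior_E (k : nat) (P : set 'rV[R]_k) : set 'rV[R]_k :=
  [set x | exists2 r : R, 0 < r & forall y, dis x y < r -> P y].
Definition closure_E (k : nat) (P : set 'rV[R]_k) : set 'rV[R]_k :=
  [set x | forall e : R, 0 < e -> exists2 y, P y & dis x y < e].
Definition boundary (k : nat) (P : set 'rV[R]_k) : set 'rV[R]_k :=
  closure_E P `\` interior_E P.

Definition conv_hull (k m : nat) (V : 'I_m -> 'rV[R]_k) : set 'rV[R]_k :=
  [set x | exists w : 'I_m -> R, (forall i, 0 <= w i) /\ \sum_(i < m) w i = 1
           /\ x = \sum_(i < m) w i *: V i].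

(* a k-dimensional (convex) polytope in R^k: convex hull of finitely many
   points, with nonempty interior *)
Definition polytope (k : nat) (P : set 'rV[R]_k) : Prop :=
  (exists m (V : 'I_m -> 'rV[R]_k), P = conv_hull V) /\
  (exists x, interior_E P x).

Definition dis_bd (k : nat) (P : set 'rV[R]_k) (x : 'rV[R]_k) : R :=
  inf [set dis x y | y in boundary P].

Definition disp_val (k n : nat) (P : set 'rV[R]_k) (X : 'I_n -> 'rV[R]_k) : R :=
  inf [set r | (exists i, r = dis_bd P (X i)) \/
               (exists i j, i <> j /\ r = dis (X i) (X j))].

(* Disp(n;P) = max over X_1..X_n in P of disp_val (taken as a sup; the max is
   attained since P is compact) *)
Definition Disp (k n : nat) (P : set 'rV[R]_k) : R :=
  sup [set disp_val P X | X in [set X : 'I_n -> 'rV[R]_k | forall i, P (X i)]].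

End Defs.

(* Main.v *)
Require Import Defs.
From HB Require Import structures.
From mathcomp Require Import all_boot all_order all_algebra.
From mathcomp Require Import boolp classical_sets reals topology normedtype derive.
From mathcomp Require Import ring lra.
Import Order.TTheory GRing.Theory Num.Theory.
Import numFieldNormedType.Exports.
Set Implicit Arguments. Unset Strict Implicit. Unset Printing Implicit Defensive.
Local Open Scope ring_scope.
Local Open Scope classical_set_scope.

Section Eu.
Variable R : realType.
Variable k : nat.
Implicit Types x y z : 'rV[R]_k.

Definition eu x : R := Num.sqrt (\sum_(i < k) (x ord0 i) ^+ 2).

Lemma disE x y : dis x y = eu (x - y).
Proof. by rewrite /dis /eu; congr Num.sqrt; apply: eq_bigr => i _; rewrite !mxE. Qed.

Lemma eu_ge0 x : 0 <= eu x.
Proof. exact: sqrtr_ge0. Qed.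

Lemma sum_sq_ge0 x : 0 <= \sum_(i < k) (x ord0 i) ^+ 2.
Proof. by apply: sumr_ge0 => i _; exact: sqr_ge0. Qed.

Lemma eu_sq x : eu x ^+ 2 = \sum_(i < k) (x ord0 i) ^+ 2.
Proof. by rewrite sqr_sqrtr // sum_sq_ge0. Qed.

Lemma eu_scale (c : R) x : eu (c *: x) = `|c| * eu x.
Proof.
rewrite /eu -sqrtr_sqr -sqrtrM ?sqr_ge0 //; congr Num.sqrt.
by rewrite mulr_sumr; apply: eq_bigr => i _; rewrite !mxE exprMn.
Qed.

Lemma eu_opp x : eu (- x) = eu x.
Proof. by rewrite -scaleN1r eu_scale normrN normr1 mul1r. Qed.

Lemma eu0 : eu 0 = 0.
Proof. by rewrite -(scale0r (0 : 'rV[R]_k)) eu_scale normr0 mul0r. Qed.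

Lemma cauchy_schwarz x y :
  \sum_(i < k) x ord0 i * y ord0 i <= eu x * eu y.
Proof.
set A := eu x; set B := eu y; set c := \sum_(i < k) _.
have A0 : 0 <= A by exact: eu_ge0.
have B0 : 0 <= B by exact: eu_ge0.
have key : 2 * (A * B) * c <= 2 * (A ^+ 2 * B ^+ 2).
  have -> : 2 * (A ^+ 2 * B ^+ 2) =
     \sum_(i < k) ((x ord0 i) ^+ 2 * B ^+ 2 + (y ord0 i) ^+ 2 * A ^+ 2).
    by rewrite big_split /= -!mulr_suml /A /B !eu_sq; ring.
  rewrite /c mulr_sumr; apply: ler_sum => i _.
  have := sqr_ge0 (x ord0 i * B - y ord0 i * A); nra.
have [AB0|AB0] := eqVneq (A * B) 0.
  have : (A == 0) || (B == 0) by rewrite -mulf_eq0 AB0.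
  have zero : forall z : 'rV[R]_k, eu z = 0 -> forall i, z ord0 i = 0.
    move=> z ez i; apply/eqP; rewrite -sqrf_eq0; apply/eqP.
    have := eu_sq z; rewrite ez expr0n /= => /esym/psumr_eq0P -> //.
    by move=> j _; exact: sqr_ge0.
  case/orP => /eqP H0.
    rewrite AB0 /c big1 // => i _; by rewrite (zero x H0) mul0r.
  rewrite AB0 /c big1 // => i _; by rewrite (zero y H0) mulr0.
have ABp : 0 < A * B by rewrite lt_def AB0 mulr_ge0.
nra.
Qed.

Lemma eu_triangle x y : eu (x + y) <= eu x + eu y.
Proof.
have h0 : 0 <= eu x + eu y by rewrite addr_ge0 ?eu_ge0.
rewrite {1}/eu -(ger0_norm h0) -sqrtr_sqr ler_sqrt ?sqr_ge0 //.
have -> : \sum_(i < k) ((x + y) ord0 i) ^+ 2 =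
   \sum_(i < k) (x ord0 i) ^+ 2 + \sum_(i < k) (y ord0 i) ^+ 2
   + 2 * \sum_(i < k) x ord0 i * y ord0 i.
  rewrite mulr_sumr -!big_split /=; apply: eq_bigr => i _; rewrite !mxE; ring.
rewrite -!eu_sq; have := cauchy_schwarz x y; nra.
Qed.

Lemma dis_ge0 x y : 0 <= dis x y.
Proof. exact: sqrtr_ge0. Qed.

Lemma dis_sym x y : dis x y = dis y x.
Proof. by rewrite !disE -opprB eu_opp. Qed.

Lemma dis_xx x : dis x x = 0.
Proof. by rewrite disE subrr eu0. Qed.

Lemma dis_tri x y z : dis x z <= dis x y + dis y z.
Proof.
rewrite !disE; have -> : x - z = (x - y) + (y - z) by rewrite addrA subrK.
exact: eu_triangle.
Qed.

End Eu.

Section Bd.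
Variable R : realType.
Variable k : nat.
Implicit Types x y z : 'rV[R]_k.
Variable P : set 'rV[R]_k.

Lemma dis_bd_ge0 x : 0 <= dis_bd P x.
Proof.
rewrite /dis_bd; have [->|ne] := eqVneq [set dis x y | y in boundary P] set0.
  by rewrite inf0.
apply: lb_le_inf; first exact/set0P.
by move=> _ [y _ <-]; exact: dis_ge0.
Qed.

Lemma dis_bd_le x b : boundary P b -> dis_bd P x <= dis x b.
Proof.
move=> hb; apply: ge_inf; last by exists b.
by exists 0 => _ [y _ <-]; exact: dis_ge0.
Qed.

Lemma dis_bd_lip x y : dis_bd P x - dis x y <= dis_bd P y.
Proof.
rewrite {2}/dis_bd; have [E0|ne] := eqVneq [set dis y b | b in boundary P] set0.
  rewrite E0 inf0 subr_le0.
  have -> : dis_bd P x = 0.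
    rewrite /dis_bd; suff -> : [set dis x b | b in boundary P] = set0 by rewrite inf0.
    apply/seteqP; split => // r [b hb _]; have : [set dis y b | b in boundary P] (dis y b).
      by exists b.
    by rewrite E0.
  exact: dis_ge0.
apply: lb_le_inf; first exact/set0P.
move=> _ [b hb <-]; rewrite lerBlDr.
apply: le_trans (@dis_bd_le x b hb) _.
by rewrite addrC; exact: dis_tri.
Qed.

Variable n : nat.
Variable p : 'I_n -> 'rV[R]_k.

Definition fval x := \big[Order.min/dis_bd P x]_(i < n) dis x (p i).

Lemma fval_ge a x : a <= dis_bd P x -> (forall i, a <= dis x (p i)) -> a <= fval x.
Proof.
move=> h1 h2; rewrite /fval; elim/big_ind: _ => //.
by move=> u v hu hv; rewrite le_min hu hv.
Qed.

Lemma fval_le_bd x : fval x <= dis_bd P x.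
Proof.
rewrite /fval; elim/big_rec: _ => [|i u _ hu]; first exact: lexx.
by rewrite ge_min hu orbT.
Qed.

Lemma fval_le_dis x i : fval x <= dis x (p i).
Proof.
by rewrite /fval (bigD1 i) //= ge_min lexx.
Qed.

Lemma fval_ge0 x : 0 <= fval x.
Proof. by apply: fval_ge; [exact: dis_bd_ge0 | move=> i; exact: dis_ge0]. Qed.

Lemma fval_lip x y : fval x - dis x y <= fval y.
Proof.
apply: fval_ge.
  apply: le_trans _ (dis_bd_lip x y); rewrite lerD2r; exact: fval_le_bd.
move=> i; rewrite lerBlDr; apply: le_trans (fval_le_dis x i) _.
by rewrite addrC; exact: dis_tri.
Qed.

Lemma fval_lip_norm x y : `|fval x - fval y| <= dis x y.
Proof.
have h1 := fval_lip x y; have h2 := fval_lip y x; rewrite dis_sym in h2.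
rewrite ler_norml; apply/andP; split; lra.
Qed.

End Bd.

Section Ball.
Variable R : realType.
Variable k : nat.
Implicit Types x y z v : 'rV[R]_k.

Lemma dis_line x v a c : dis (x + a *: v) (x + c *: v) = `|a - c| * eu v.
Proof.
rewrite disE -eu_scale; congr eu.
by rewrite opprD addrACA subrr add0r -scaleNr -scalerDl.
Qed.

Lemma ball_in (P : set 'rV[R]_k) x y : P x -> dis x y < dis_bd P x -> P y.
Proof.
move=> Px hxy; apply: contrapT => nPy.
set v := y - x.
have xv : forall t, x + t *: v = x + t *: v by [].
have Lv : dis x y = eu v by rewrite disE /v -opprB eu_opp.
set L := eu v.
have L0 : 0 <= L by exact: eu_ge0.
have x0 : x + 0 *: v = x by rewrite scale0r addr0.
have x1 : x + 1 *: v = y by rewrite scale1r /v addrC subrK.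
set T := [set t : R | (0 <= t <= 1) /\ P (x + t *: v)].
have T0 : T 0 by split; [rewrite lexx ler01 | rewrite x0].
have hT : has_sup T by split; [exists 0 | exists 1 => t [/andP[_ ]]].
set t0 := sup T.
have t0ge : 0 <= t0 by exact: sup_upper_bound.
have t0le : t0 <= 1 by apply: ge_sup; [exists 0 | move=> t [/andP[_ ]]].
set b := x + t0 *: v.
have bx : dis x b = t0 * L.
  by rewrite -{1}x0 dis_line sub0r normrN ger0_norm.
have hb : boundary P b.
  split.
    move=> e e0.
    have ep : 0 < e / (L + 1) by rewrite divr_gt0 // ltr_wpDl.
    have [t [/andP[t0' t1'] Pt] ht] := sup_adherent ep hT.
    exists (x + t *: v) => //.
    have tle : t <= t0 by apply: (sup_upper_bound hT); split => //; apply/andP; split.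
    rewrite dis_line ger0_norm ?subr_ge0 //.
    have : (t0 - t) < e / (L + 1) by move: ht; rewrite -/t0; lra.
    rewrite ltr_pdivlMr ?ltr_wpDl // => h.
    have tt : 0 <= t0 - t by lra. rewrite -/L; nra.
  case=> r r0 Hr.
  have [/eqP t01|t01] := boolP (t0 == 1).
    apply: nPy; rewrite -x1 -t01; apply: Hr; rewrite dis_xx //.
  have t0lt : t0 < 1 by rewrite lt_neqAle t01 t0le.
  set d := Order.min (1 - t0) (r / (L + 1)).
  have d0 : 0 < d by rewrite lt_min subr_gt0 t0lt divr_gt0 // ltr_wpDl.
  have d1 : d <= 1 - t0 by rewrite ge_min lexx.
  have d2 : d <= r / (L + 1) by rewrite ge_min lexx orbT.
  have Td : T (t0 + d).
    split; first by apply/andP; split; lra.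
    apply: Hr; rewrite dis_line.
    have -> : t0 - (t0 + d) = - d by ring.
    rewrite normrN ger0_norm ?ltW //.
    move: d2; rewrite ler_pdivlMr ?ltr_wpDl // => d2; rewrite -/L; nra.
  have := sup_upper_bound hT Td; rewrite -/t0; lra.
have := dis_bd_le x hb; rewrite bx; move: hxy; rewrite Lv -/L => hxy.
have : 0 <= (1 - t0) * L by rewrite mulr_ge0 // subr_ge0.
nra.
Qed.

End Ball.

Section Pigeon.
Variable R : realType.
Variable k : nat.
Hypothesis hk : (0 < k)%N.
Let i0 : 'I_k := Ordinal hk.
Let e : 'rV[R]_k := \row_(i < k) ((i == i0)%:R : R).

Lemma eu_e : eu e = 1.
Proof.
rewrite /eu (bigD1 i0) //= big1 => [|i ne]; first by rewrite !mxE eqxx expr1n addr0 sqrtr1.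
by rewrite !mxE (negbTE ne) expr0n.
Qed.

Lemma push (x y : 'rV[R]_k) c : y ord0 i0 <= x ord0 i0 -> 0 <= c ->
  dis x y <= dis (x + c *: e) (y + (- c) *: e).
Proof.
move=> hxy c0; rewrite /dis ler_sqrt; last by apply: sumr_ge0 => i _; exact: sqr_ge0.
apply: ler_sum => i _; rewrite !mxE.
have [->|ne] := eqVneq i i0 => /=; last by rewrite !mulr0 !addr0.
rewrite !mulr1.
have : 0 <= x ord0 i0 - y ord0 i0 by rewrite subr_ge0.
nra.
Qed.

Lemma disp_facts (P : set 'rV[R]_k) n (X : 'I_n -> 'rV[R]_k) :
  (forall i, disp_val P X <= dis_bd P (X i)) /\
  (forall i j, i <> j -> disp_val P X <= dis (X i) (X j)).
Proof.
have hl : has_lbound [set r | (exists i, r = dis_bd P (X i)) \/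
               (exists i j, i <> j /\ r = dis (X i) (X j))].
  exists 0 => r [[i ->]|[i [j [_ ->]]]]; [exact: dis_bd_ge0 | exact: dis_ge0].
split.
  move=> i; apply: ge_inf => //; by left; exists i.
move=> i j ij; apply: ge_inf => //; by right; exists i, j.
Qed.

Lemma main1 (P : set 'rV[R]_k) n (hn : (0 < n)%N) (p X : 'I_n -> 'rV[R]_k) :
  (forall i, P (X i)) -> 0 < disp_val P X ->
  exists q, P q /\ disp_val P X / 2 <= fval P p q.
Proof.
move=> HX; set d := disp_val P X => d0.
have [dX1 dX2] := disp_facts P X; rewrite -/d in dX1 dX2.
have [j' Hj'] : exists j', forall l, X j' ord0 i0 <= X l ord0 i0.
  case: (@arg_minP _ _ _ (Ordinal hn) xpredT (fun l => X l ord0 i0)) => // j' _ H.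
  by exists j' => l; apply: H.
set s := d / 2.
have s0 : 0 < s by rewrite /s divr_gt0.
pose lo (a : option 'I_n) := if a is Some l then l else j'.
pose sg (a : option 'I_n) : R := if a is Some _ then 1 else -1.
pose W a := X (lo a) + (sg a * s) *: e.
have Wdis : forall a, dis (X (lo a)) (W a) = s.
  move=> a; rewrite disE /W opprD addrA subrr add0r eu_opp eu_scale eu_e mulr1.
  by rewrite normrM; case: a => [l|] /=; rewrite ?normrN normr1 mul1r ger0_norm // ltW.
have WP : forall a, P (W a).
  move=> a; apply: (ball_in (HX (lo a))); rewrite Wdis.
  by apply: lt_le_trans (dX1 _); rewrite /s; lra.
have Wbd : forall a, s <= dis_bd P (W a).
  move=> a; apply: le_trans (dis_bd_lip P (X (lo a)) (W a)); rewrite Wdis.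
  by have := dX1 (lo a); rewrite /s; lra.
have Wpair : forall a b, a <> b -> d <= dis (W a) (W b).
  have key : forall l, d <= dis (W (Some l)) (W None).
    move=> l; have [->|ne] := eqVneq l j'.
      rewrite /W /= dis_line eu_e mulr1.
      have -> : 1 * s - -1 * s = d by rewrite /s; lra.
      by rewrite ger0_norm // ltW.
    apply: le_trans (dX2 l j' (elimN eqP ne)) _.
    rewrite /W /= mul1r mulN1r; apply: push; [exact: Hj' | exact: ltW].
  move=> [l|] [l'|] // ne.
  - have ll : l <> l' by move=> h; apply: ne; rewrite h.
    apply: le_trans (dX2 l l' ll) _; rewrite !disE /W /=.
    by rewrite opprD addrACA subrr addr0.
  - by first [exact: key | rewrite dis_sym; exact: key].
have [a Ha] : exists a, forall i, s <= dis (W a) (p i).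
  apply: contrapT => H.
  have H' : forall a, exists i, dis (W a) (p i) < s.
    move=> a; apply: contrapT => H2; apply: H; exists a => i.
    rewrite leNgt; apply/negP => h; apply: H2; by exists i.
  pose c a := odflt j' [pick i | dis (W a) (p i) < s].
  have cP : forall a, dis (W a) (p (c a)) < s.
    move=> a; rewrite /c; case: pickP => [i //|/= none].
    by have [i hi] := H' a; have := none i; rewrite hi.
  have inj : injective c.
    move=> a b hab; apply: contrapT => neq.
    have := Wpair a b neq; have := dis_tri (W a) (p (c a)) (W b).
    have := cP a; have := cP b; rewrite dis_sym hab /s; lra.
  by have := leq_card c inj; rewrite card_option card_ord ltnn.
exists (W a); split; first exact: WP.
by apply: fval_ge => //; exact: Wbd.
Qed.

End Pigeon.

Section EVT.
Variable R : realType.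

Lemma coord_le m (w : 'rV[R]_m) j : `|w ord0 j| <= `|w|.
Proof.
rewrite [leRHS]/Num.norm /= mx_normrE; apply/bigmax_geP; right => /=.
by exists (ord0, j).
Qed.

Lemma lip_cont m (g : 'rV[R]_m -> R) C : 0 <= C ->
  (forall x y, `|g x - g y| <= C * `|x - y|) -> continuous g.
Proof.
move=> C0 H x; apply/(@cvgrPdist_lt _ _ _ (nbhs x) (nbhs_filter x)) => eps eps0.
apply/nbhs_ballP; exists (eps / (C + 1)); first by rewrite /= divr_gt0 // ltr_wpDl.
move=> y; rewrite mx_norm_ball /ball_ /= => hy; apply: le_lt_trans (H x y) _.
move: hy; rewrite ltr_pdivlMr ?ltr_wpDl // => hy.
have := normr_ge0 (x - y); nra.
Qed.

Lemma cont_proj m j : continuous (fun w : 'rV[R]_m => w ord0 j).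
Proof.
apply: (@lip_cont _ _ 1) => // x y; rewrite mul1r.
by have := coord_le (x - y) j; rewrite !mxE.
Qed.

Lemma cont_sum m : continuous (fun w : 'rV[R]_m => \sum_(j < m) w ord0 j).
Proof.
apply: (@lip_cont _ _ m%:R) => // x y.
rewrite -sumrB; apply: le_trans (ler_norm_sum _ _ _) _.
have -> : m%:R * `|x - y| = \sum_(j < m) `|x - y|.
  by rewrite sumr_const card_ord mulr_natl.
apply: ler_sum => j _; have := coord_le (x - y) j; rewrite !mxE //.
Qed.

Variable k m : nat.
Variable V : 'I_m -> 'rV[R]_k.

Definition simplex : set 'rV[R]_m :=
  [set w | (forall j, 0 <= w ord0 j) /\ \sum_(j < m) w ord0 j = 1].
Definition phi (w : 'rV[R]_m) : 'rV[R]_k := \sum_(j < m) w ord0 j *: V j.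

Lemma simplex_closed : closed simplex.
Proof.
have -> : simplex = (\bigcap_(j in setT) ((fun w : 'rV[R]_m => w ord0 j) @^-1` [set x | 0 <= x]))
   `&` ((fun w : 'rV[R]_m => \sum_(j < m) w ord0 j) @^-1` [set x | x = 1]).
  apply/seteqP; split => w /=.
    by move=> [h1 h2]; split => // j _; exact: h1.
  by move=> [h1 h2]; split => // j; exact: h1.
apply: closedI.
  apply: closed_bigI => j _; apply: preimage_closed; last exact: closed_ge.
  by move=> x _; exact: cont_proj.
apply: preimage_closed; last exact: closed_eq.
by move=> x _; exact: cont_sum.
Qed.

Lemma simplex_bounded : bounded_set simplex.
Proof.
exists 1; split => // M M1 w [w0 w1].
apply: le_trans (ltW M1); rewrite /Num.norm /= mx_normrE; apply: bigmax_le => // ij _.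
rewrite (ord1 ij.1) ger0_norm // -w1 (bigD1 ij.2) //= lerDl.
by apply: sumr_ge0 => i _.
Qed.

Lemma eu_sum (I : finType) (x : I -> 'rV[R]_k) :
  eu (\sum_i x i) <= \sum_i eu (x i).
Proof.
elim/big_rec2: _ => [|j a b _ h]; first by rewrite eu0.
by apply: le_trans (eu_triangle _ _) _; rewrite lerD2l.
Qed.

Lemma phi_lip (w w' : 'rV[R]_m) :
  dis (phi w) (phi w') <= (\sum_(j < m) eu (V j)) * `|w - w'|.
Proof.
rewrite disE /phi -sumrB.
have -> : \sum_(j < m) (w ord0 j *: V j - w' ord0 j *: V j) =
          \sum_(j < m) (w ord0 j - w' ord0 j) *: V j.
  by apply: eq_bigr => j _; rewrite scalerBl.
apply: le_trans (eu_sum _) _; rewrite mulr_suml; apply: ler_sum => j _.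
rewrite eu_scale mulrC ler_wpM2l ?eu_ge0 //.
by have := coord_le (w - w') j; rewrite !mxE.
Qed.

Lemma evt (P : set 'rV[R]_k) n (p : 'I_n -> 'rV[R]_k) :
  P = conv_hull V -> P !=set0 ->
  exists q, P q /\ forall y, P y -> fval P p y <= fval P p q.
Proof.
move=> HP [y0 Py0].
have toS : forall y, P y -> exists2 w, simplex w & phi w = y.
  move=> y; rewrite HP => -[w [w0 [w1 ->]]].
  exists (\row_j w j); first by split; [move=> j; rewrite mxE | under eq_bigr do rewrite mxE].
  by rewrite /phi; apply: eq_bigr => j _; rewrite mxE.
have fromS : forall w, simplex w -> P (phi w).
  move=> w [w0 w1]; rewrite HP; exists (fun j => w ord0 j); split => //.
have Sne : simplex !=set0 by have [w Sw _] := toS _ Py0; exists w.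
have cS : compact simplex by apply: bounded_closed_compact;
  [exact: simplex_bounded | exact: simplex_closed].
have cF : {within simplex, continuous (fun w => fval P p (phi w))}.
  apply: continuous_subspaceT.
  apply: (@lip_cont _ _ (\sum_(j < m) eu (V j))).
    by apply: sumr_ge0 => j _; exact: eu_ge0.
  move=> x y; apply: le_trans (fval_lip_norm P p _ _) _; exact: phi_lip.
have [c cSc cmax] := EVT_max_rV Sne cS cF.
rewrite inE in cSc.
exists (phi c); split; first exact: fromS.
move=> y Py; have [w Sw <-] := toS y Py; apply: cmax; by rewrite inE.
Qed.

End EVT.

Theorem lemma4 (R : realType) (k n : nat) (hk : (2 <= k)%N) (hn : (1 <= n)%N)
  (P : set 'rV[R]_k) (hP : polytope P)
  (p : 'I_n -> 'rV[R]_k) (hp : forall i, P (p i)) :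
  exists q : 'rV[R]_k, P q /\
    (forall i, Disp n P / 2 <= dis q (p i)) /\
    Disp n P / 2 <= dis_bd P q.
Proof.
have [[m [V HP]] [x0 [r r0 Hr]]] := hP.
have Px0 : P x0 by apply: Hr; rewrite dis_xx.
have hk0 : (0 < k)%N by apply: leq_trans hk.
have [q [Pq qmax]] := evt p HP (ex_intro _ x0 Px0).
have key : forall X : 'I_n -> 'rV[R]_k, (forall i, P (X i)) -> disp_val P X <= 2 * fval P p q.
  move=> X HX; have [d0|d0] := lerP (disp_val P X) 0.
    by apply: le_trans d0 _; rewrite mulr_ge0 // fval_ge0.
  have [q' [Pq' h]] := @main1 R k hk0 P n hn p X HX d0.
  have := qmax q' Pq'; lra.
have hD : Disp n P <= 2 * fval P p q.
  apply: ge_sup; first by exists (disp_val P p); exists p.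
  by move=> _ [X HX <-]; exact: key.
exists q; split => //; split.
  move=> i; have := fval_le_dis P p q i; lra.
have := fval_le_bd P p q; lra.
Qed.
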